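(* Let $N\ge 2$ and $0<\gamma_1\le\gamma_2\le\dots\le\gamma_N$ with $\gamma_i+\frac{\gamma_i}{\gamma_i+\gamma_j}\ge 1$ for all distinct $i,j$. Among all spanning trees $T$ on $\{1,\dots,N\}$, the star $S$ centered at vertex $1$ (edges $\{1,j\}$ for $j=2,\dots,N$) maximizes $R_{\mathrm s}(T)$, and $$R_{\mathrm s}(S)=\frac{1}{2(N-1)}\log_2\!\Big(\Big(\gamma_1+\frac{\gamma_1}{\gamma_1+\gamma_N}\Big)\prod_{i=2}^{N}\Big(\gamma_i+\frac{\gamma_i}{\gamma_i+\gamma_1}\Big)\Big).$$
   Context: For distinct $i,j$ put $\varphi(i,j)=\log_2\!\big(\gamma_i+\frac{\gamma_i}{\gamma_i+\gamma_j}\big)$. For a spanning tree $T$ on $\{1,\dots,N\}$ with neighbor sets $A_i^T$, define the sum rate $$R_{\mathrm s}(T)=\frac{1}{2(N-1)}\sum_{i=1}^N \min_{j\in A_i^T}\varphi(i,j).$$ A spanning tree is called sum-rate optimal if it maximizes $R_{\mathrm s}$ over all spanning trees on $\{1,\dots,N\}$. *)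

(* Defs.v *)
From Stdlib Require Import Reals.
From mathcomp Require Import all_boot.
Set Implicit Arguments.
Local Open Scope R_scope. Unset Strict Implicit. Unset Printing Implicit Defensive.

(* Vertices of {1,...,N} are represented by 'I_N (paper vertex i <-> ordinal i-1);
   gamma : nat -> R, paper gamma_i = gamma (i-1). *)

Definition log2 (x : R) : R := ln x / ln 2.

Definition phi (gamma : nat -> R) (i j : nat) : R :=
  log2 (gamma i + gamma i / (gamma i + gamma j)).

Definition adj (N : nat) (E : {set {set 'I_N}}) : rel 'I_N :=
  fun x y => [set x; y] \in E.

Definition is_spanning_tree (N : nat) (E : {set {set 'I_N}}) : Prop :=
  (forall e, e \in E -> #|e| = 2%nat) /\ #|E| = N.-1 /\
  (forall x y : 'I_N, connect (adj E) x y).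

Definition nbrs (N : nat) (E : {set {set 'I_N}}) (i : 'I_N) : {set 'I_N} :=
  [set j | adj E i j].

(* minimum of f over a finite set A (0 if A is empty, which never happens for
   neighbour sets in a spanning tree with N >= 2). *)
Definition minR (N : nat) (A : {set 'I_N}) (f : 'I_N -> R) : R :=
  match [pick j in A] with
  | Some j0 => \big[Rmin/f j0]_(j in A) f j
  | None => 0
  end.

Definition sum_rate (N : nat) (gamma : nat -> R) (E : {set {set 'I_N}}) : R :=
  / (2 * INR (N.-1)) *
   \big[Rplus/0]_(i : 'I_N) minR (nbrs E i) (fun j => phi gamma i j).

Definition sum_rate_optimal (N : nat) (gamma : nat -> R) (E : {set {set 'I_N}}) : Prop :=
  is_spanning_tree E /\
  forall T : {set {set 'I_N}}, is_spanning_tree T -> sum_rate gamma T <= sum_rate gamma E.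

Definition star0 (N : nat) : {set {set 'I_N}} :=
  [set e : {set 'I_N} |
     [exists i : 'I_N, exists j : 'I_N,
        [&& val i == 0%nat, j != i & e == [set i; j]]]].

(* Main.v *)
From HB Require Import structures.
Require Import Defs.
From Stdlib Require Import Reals Lra Lia.
From mathcomp Require Import all_boot.
Local Open Scope R_scope.

HB.instance Definition _ := Monoid.isComLaw.Build R 0 Rplus (fun a b c => esym (Rplus_assoc a b c)) Rplus_comm Rplus_0_l.

Definition psi (a b : R) := a + a / (a + b).

Lemma psi_pos a b : 0 < a -> 0 < b -> 0 < psi a b.
Proof. intros. unfold psi. assert (0 < a / (a+b)) by (apply Rdiv_lt_0_compat; lra). lra. Qed.

Lemma psi_anti a b c : 0 < a -> 0 < b -> b <= c -> psi a c <= psi a b.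
Proof.
intros. unfold psi. apply Rplus_le_compat_l. unfold Rdiv. apply Rmult_le_compat_l; [lra|].
apply Rinv_le_contravar; lra.
Qed.

Lemma log2_le x y : 0 < x -> x <= y -> log2 x <= log2 y.
Proof.
intros. unfold log2, Rdiv. apply Rmult_le_compat_r.
- apply Rlt_le, Rinv_0_lt_compat. rewrite <- ln_1. apply ln_increasing; lra.
- destruct (Rle_lt_or_eq_dec _ _ H0) as [h|h]; [apply Rlt_le, ln_increasing; lra| rewrite h; lra].
Qed.

Lemma log2_mult x y : 0 < x -> 0 < y -> log2 (x * y) = log2 x + log2 y.
Proof. intros. unfold log2. rewrite ln_mult; auto. unfold Rdiv. ring. Qed.

Lemma psi_chain a x y : 0 < a -> a <= x -> 0 < y ->
  psi a x * psi x y <= psi a y * psi x a.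
Proof.
intros. unfold psi.
assert (E1 : (a + a / (a + x)) * (x + x / (x + y)) = (a*x*(1 + /(a+x))) * (1 + /(x+y))) by (field; lra).
assert (E2 : (a + a / (a + y)) * (x + x / (x + a)) = (a*x*(1 + /(a+x))) * (1 + /(a+y))).
{ replace (x+a) with (a+x) by ring. field; lra. }
rewrite E1 E2. apply Rmult_le_compat_l.
- assert (0 < /(a+x)) by (apply Rinv_0_lt_compat; lra).
  assert (0 < a*x) by (apply Rmult_lt_0_compat; lra). nra.
- apply Rplus_le_compat_l. apply Rinv_le_contravar; lra.
Qed.

Lemma phi_psi gamma i j : phi gamma i j = log2 (psi (gamma i) (gamma j)).
Proof. reflexivity. Qed.

Lemma bigmin_le_seq (T : eqType) (s : seq T) (f : T -> R) x0 j :
  j \in s -> \big[Rmin/x0]_(i <- s) f i <= f j.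
Proof.
elim: s => [|a s IH] //. rewrite in_cons big_cons => /orP [/eqP ->|h].
- apply Rmin_l.
- eapply Rle_trans; [apply Rmin_r| exact: IH].
Qed.

Lemma minR_le (N : nat) (A : {set 'I_N}) (f : 'I_N -> R) j :
  j \in A -> minR A f <= f j.
Proof.
move=> hj. rewrite /minR. case: pickP => [j0 _|h]; last by rewrite h in hj.
rewrite -big_filter. apply: bigmin_le_seq. by rewrite mem_filter hj mem_index_enum.
Qed.

Lemma minR_ge (N : nat) (A : {set 'I_N}) (f : 'I_N -> R) c j :
  j \in A -> (forall k, k \in A -> c <= f k) -> c <= minR A f.
Proof.
move=> hj hc. rewrite /minR. case: pickP => [j0 hj0|h]; last by rewrite h in hj.
apply: (big_ind (fun x => c <= x)); [exact: hc | | exact: hc].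
move=> x y hx hy. by apply Rmin_glb.
Qed.

Lemma log2_prod (s : seq nat) (f : nat -> R) :
  (forall i, i \in s -> 0 < f i) ->
  0 < \big[Rmult/1]_(i <- s) f i /\
  log2 (\big[Rmult/1]_(i <- s) f i) = \big[Rplus/0]_(i <- s) log2 (f i).
Proof.
elim: s => [|a s IH] h.
- rewrite !big_nil. split; [lra|]. rewrite /log2 ln_1. unfold Rdiv. ring.
- rewrite !big_cons. have ha : 0 < f a by apply: h; rewrite in_cons eqxx.
  have [h1 h2] : 0 < \big[Rmult/1]_(i <- s) f i /\
      log2 (\big[Rmult/1]_(i <- s) f i) = \big[Rplus/0]_(i <- s) log2 (f i).
  { apply: IH => i hi. apply: h. by rewrite in_cons hi orbT. }
  split; first by apply Rmult_lt_0_compat.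
  by rewrite log2_mult // h2.
Qed.

Lemma sum_uniq_le (N : nat) (l : seq 'I_N) (g : 'I_N -> R) :
  uniq l -> (forall i, 0 <= g i) ->
  \big[Rplus/0]_(i <- l) g i <= \big[Rplus/0]_(i : 'I_N) g i.
Proof.
move=> hu hg. rewrite (big_uniq _ hu) [X in _ <= X](bigID (fun i => i \in l)) /=.
have : 0 <= \big[Rplus/0]_(i | ~~ (i \in l)) g i.
{ apply: (big_ind (fun x => 0 <= x)) => //; [lra| move=> x y; lra]. }
move=> h. rewrite -[X in X <= _]Rplus_0_r. apply Rplus_le_compat_l. exact h.
Qed.
Arguments minR_le {N A} f {j}.
Arguments minR_ge {N A} f c {j}.

Lemma adj_star n (x y : 'I_n.+2) :
  adj (star0 n.+2) x y = ((x == ord0) && (y != ord0)) || ((y == ord0) && (x != ord0)).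
Proof.
rewrite /adj /star0 inE. apply/existsP/idP.
- case=> i /existsP [j /and3P [/eqP hi hji /eqP he]].
  have ei : i = ord0 by apply: val_inj.
  subst i.
  have hx : x \in [set ord0; j] by rewrite -he set21.
  have hy : y \in [set ord0; j] by rewrite -he set22.
  have h0 : ord0 \in [set x; y] by rewrite he set21.
  have hj : j \in [set x; y] by rewrite he set22.
  move: hx hy h0 hj; rewrite !in_set2.
  case/orP=> /eqP hx; case/orP=> /eqP hy; subst => //=.
  all: rewrite ?(eq_sym ord0 j) ?eqxx ?(negbTE hji) //=.
- case/orP=> /andP [/eqP hx hy].
  + exists ord0; apply/existsP; exists y. by rewrite eqxx hy hx eqxx.
  + exists ord0; apply/existsP; exists x. by rewrite eqxx hy hx setUC eqxx.
Qed.

Lemma star_tree n : is_spanning_tree (star0 n.+2).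
Proof.
split; [|split].
- move=> e. rewrite /star0 inE => /existsP [i /existsP [j /and3P [_ hji /eqP ->]]].
  by rewrite cards2 eq_sym hji.
- have -> : star0 n.+2 = [set [set ord0; j] | j in [set~ (ord0 : 'I_n.+2)]].
  { apply/setP => e. rewrite /star0 inE. apply/existsP/imsetP.
    - case=> i /existsP [j /and3P [/eqP hi hji /eqP ->]].
      have ei : i = ord0 by apply: val_inj.
      subst i. exists j => //. by rewrite in_setC1.
    - case=> j; rewrite in_setC1 => hj ->. exists ord0; apply/existsP; exists j.
      by rewrite eqxx hj eqxx. }
  rewrite card_in_imset ?cardsC1 ?card_ord //.
  move=> j k; rewrite !in_setC1 => hj hk he.
  have : j \in [set ord0; k] by rewrite -he set22.
  by rewrite in_set2 (negbTE hj) => /eqP.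
- have c0 : forall z : 'I_n.+2, connect (adj (star0 n.+2)) z ord0 /\
                                connect (adj (star0 n.+2)) ord0 z.
  { move=> z. case: (eqVneq z ord0) => [->|hz]; first by split; apply: connect0.
    split; apply: connect1; by rewrite adj_star eqxx hz ?orbT. }
  move=> x y. apply: (connect_trans (proj1 (c0 x)) (proj2 (c0 y))).
Qed.

Lemma phi_anti n gamma (hpos : forall i, (i < n.+2)%N -> 0 < gamma i) (i j k : nat) :
  (i < n.+2)%N -> (j < n.+2)%N -> (k < n.+2)%N -> gamma j <= gamma k ->
  phi gamma i k <= phi gamma i j.
Proof.
move=> hi hj hk hjk. rewrite !phi_psi. apply: log2_le.
- apply: psi_pos; by apply: hpos.
- apply: psi_anti => //; by apply: hpos.
Qed.

Lemma in_nbrs N (E : {set {set 'I_N}}) i j : (j \in nbrs E i) = adj E i j.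
Proof. by rewrite /nbrs inE. Qed.

Lemma star_sum n gamma (hpos : forall i, (i < n.+2)%N -> 0 < gamma i)
  (hsort : forall i j : nat, (i <= j)%N -> (j < n.+2)%N -> gamma i <= gamma j) :
  \big[Rplus/0]_(i : 'I_n.+2) minR (nbrs (star0 n.+2) i) (fun j => phi gamma i j) =
  phi gamma 0 n.+1 + \big[Rplus/0]_(j < n.+1) phi gamma j.+1 0.
Proof.
rewrite big_ord_recl. congr (_ + _).
- have hm : (ord_max : 'I_n.+2) \in nbrs (star0 n.+2) ord0.
  { by rewrite in_nbrs adj_star eqxx. }
  apply: Rle_antisym.
  + exact (minR_le (fun j => phi gamma (ord0 : 'I_n.+2) j) hm).
  + apply: (minR_ge _ _ hm) => k _ /=. apply: (phi_anti _ _ hpos) => //.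
    apply: hsort => //. by rewrite -ltnS.
- apply: eq_bigr => j _.
  have h0 : (ord0 : 'I_n.+2) \in nbrs (star0 n.+2) (lift ord0 j).
  { by rewrite in_nbrs adj_star eqxx /=. }
  apply: Rle_antisym.
  + exact (minR_le (fun k => phi gamma (lift ord0 j) k) h0).
  + apply: (minR_ge _ _ h0) => k.
    rewrite in_nbrs adj_star.
    have hl : (lift ord0 j == ord0) = false by [].
    rewrite hl /= => /andP [/eqP -> _]. apply: Rle_refl.
Qed.

Lemma star_log n gamma (hpos : forall i, (i < n.+2)%N -> 0 < gamma i) :
  phi gamma 0 n.+1 + \big[Rplus/0]_(j < n.+1) phi gamma j.+1 0 =
  log2 ((gamma 0%N + gamma 0%N / (gamma 0%N + gamma n.+1)) *
        \big[Rmult/1]_(1 <= i < n.+2) (gamma i + gamma i / (gamma i + gamma 0%N))).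
Proof.
have h0 : 0 < gamma 0%N by apply: hpos.
have hh : forall i, i \in index_iota 1 n.+2 -> 0 < gamma i + gamma i / (gamma i + gamma 0%N).
{ move=> i; rewrite mem_index_iota => /andP [_ hi]. exact: psi_pos (hpos i hi) h0. }
have [hp hl] := log2_prod _ _ hh.
rewrite log2_mult; [|exact (psi_pos _ _ h0 (hpos n.+1 (ltnSn _)))|exact hp].
rewrite hl big_add1 /= big_mkord. reflexivity.
Qed.

Lemma phi_chain n gamma (hpos : forall i, (i < n.+2)%N -> 0 < gamma i)
  (hsort : forall i j : nat, (i <= j)%N -> (j < n.+2)%N -> gamma i <= gamma j) (x y : nat) :
  (x < n.+2)%N -> (y < n.+2)%N ->
  phi gamma 0 x + phi gamma x y <= phi gamma 0 y + phi gamma x 0.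
Proof.
move=> hx hy. have h0 : 0 < gamma 0%N by apply: hpos.
have gx := hpos x hx. have gy := hpos y hy.
rewrite !phi_psi -!log2_mult; try apply: psi_pos => //.
apply: log2_le.
- apply: Rmult_lt_0_compat; apply: psi_pos => //.
- apply: psi_chain => //. by apply: hsort.
Qed.


Lemma core n gamma (hpos : forall i, (i < n.+2)%N -> 0 < gamma i)
  (hsort : forall i j : nat, (i <= j)%N -> (j < n.+2)%N -> gamma i <= gamma j)
  (T : {set {set 'I_n.+2}}) (hconn : forall x y : 'I_n.+2, connect (adj T) x y) :
  \big[Rplus/0]_(i : 'I_n.+2) minR (nbrs T i) (fun j => phi gamma i j) <=
  phi gamma 0 n.+1 + \big[Rplus/0]_(j < n.+1) phi gamma j.+1 0.
Proof.
pose m (i : 'I_n.+2) := minR (nbrs T i) (fun j => phi gamma i j).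
pose s (i : 'I_n.+2) := if i == ord0 then 0 else phi gamma i 0 - m i.
have nbr : forall i : 'I_n.+2, exists j, j \in nbrs T i.
{ move=> i. pose k : 'I_n.+2 := if i == ord0 then ord_max else ord0.
  have hki : k != i by rewrite /k; case: (eqVneq i ord0) => [->|h] //; rewrite eq_sym.
  case/connectP: (hconn i k) => [[|y p] hp hl].
  - by rewrite /= hl eqxx in hki.
  - exists y. rewrite in_nbrs. by case/andP: hp. }
have snn : forall i, 0 <= s i.
{ move=> i; rewrite /s; case: (eqVneq i ord0) => [_|hi]; first lra.
  have [j hj] := nbr i.
  have h1 : m i <= phi gamma i j := minR_le (fun j => phi gamma i j) hj.
  have h2 : phi gamma i j <= phi gamma i 0.
  { apply: (phi_anti _ _ hpos) => //. by apply: hsort. }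
  lra. }
have chain : forall p (x : 'I_n.+2), path (adj T) x p -> last x p = ord_max ->
    ord0 \notin (x :: p) ->
    phi gamma 0 x - phi gamma 0 n.+1 <= \big[Rplus/0]_(i <- x :: p) s i.
{ elim=> [|y p IH] x /=.
  - move=> _ -> _. rewrite big_cons big_nil. have := snn ord_max. simpl. lra.
  - case/andP=> hxy hp hl. rewrite in_cons negb_or => /andP [hx0 hy0].
    have h3 := IH y hp hl hy0. rewrite big_cons.
    have hx0' : x != ord0 by rewrite eq_sym.
    have hsx : s x = phi gamma x 0 - m x by rewrite /s (negbTE hx0').
    have h1 : m x <= phi gamma x y.
    { apply: (minR_le (fun j => phi gamma x j)). by rewrite in_nbrs. }
    have h2 := phi_chain _ _ hpos hsort _ _ (ltn_ord x) (ltn_ord y).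
    rewrite hsx. lra. }
case/connectP: (hconn ord0 ord_max) => p hp hlast.
move: hlast; case/shortenP: hp => p' hp' hu _ hlast.
case: p' hp' hu hlast => [|w q] hp' hu hlast; first by [].
case/andP: hp' => h0w hq.
have hu' : uniq (w :: q) by case/andP: hu.
have hn0 : ord0 \notin w :: q by case/andP: hu.
have hD := chain q w hq (esym hlast) hn0.
have hS := sum_uniq_le _ _ _ hu' snn.
have hm0 : m ord0 <= phi gamma 0 w.
{ apply: (minR_le (fun j => phi gamma ord0 j)). by rewrite in_nbrs. }
have E1 : \big[Rplus/0]_(i : 'I_n.+2) s i = \big[Rplus/0]_(j < n.+1) s (lift ord0 j).
{ by rewrite big_ord_recl /s eqxx Rplus_0_l. }
have E2 : \big[Rplus/0]_(j < n.+1) phi gamma j.+1 0 =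
   \big[Rplus/0]_(j < n.+1) s (lift ord0 j) + \big[Rplus/0]_(j < n.+1) m (lift ord0 j).
{ rewrite -big_split. apply: eq_bigr => j _. rewrite /s.
  have hl : (lift ord0 j == ord0) = false by [].
  rewrite hl /=. have -> : phi gamma (bump 0 j) 0 = phi gamma j.+1 0 by []. ring. }
have E3 : \big[Rplus/0]_(i : 'I_n.+2) minR (nbrs T i) (fun j => phi gamma i j) =
   m ord0 + \big[Rplus/0]_(j < n.+1) m (lift ord0 j).
{ by rewrite big_ord_recl. }
rewrite E3 E2. rewrite E1 in hS.
have h5 := Rle_trans _ _ _ hD hS.
have h6 : m ord0 <= phi gamma 0 n.+1 + \big[Rplus/0]_(j < n.+1) s (lift ord0 j) by lra.
lra.
Qed.

Theorem theorem3 (N : nat) (gamma : nat -> R)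
  (hN : (2 <= N)%nat)
  (hpos : forall i : nat, (i < N)%nat -> 0 < gamma i)
  (hsort : forall i j : nat, (i <= j)%nat -> (j < N)%nat -> gamma i <= gamma j)
  (hcond : forall i j : nat, (i < N)%nat -> (j < N)%nat -> i <> j ->
             gamma i + gamma i / (gamma i + gamma j) >= 1) :
  sum_rate_optimal gamma (star0 N) /\
  sum_rate gamma (star0 N) =
    / (2 * INR (N.-1)) *
    log2 ((gamma 0%nat + gamma 0%nat / (gamma 0%nat + gamma N.-1)) *
          \big[Rmult/1]_(1 <= i < N) (gamma i + gamma i / (gamma i + gamma 0%nat))).
Proof.
case: N hN hpos hsort {hcond} => [|[|n]] // _ hpos hsort.
have hc : 0 <= / (2 * INR (n.+2).-1).
{ apply Rlt_le, Rinv_0_lt_compat, Rmult_lt_0_compat; [lra|]. apply lt_0_INR. simpl. lia. }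
split.
- split; first exact: star_tree.
  move=> T [_ [_ hconn]]. rewrite /sum_rate. apply Rmult_le_compat_l; first exact hc.
  rewrite star_sum //. exact: core.
- rewrite /sum_rate star_sum // star_log //.
Qed.
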